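(* Let $G=(V,E)$ be an $S$-regular graph on $n$ vertices with cells $V_1,\dots,V_k$, $n_i=|V_i|$, and let $B,C\subseteq V$. Write $B_i=B\cap V_i$, $C_j=C\cap V_j$, $c_i=|C_i|/n_i$ and $b=|B|/n$. Then \[\Bigl|\,|E(B,C)|-\sum_{i=1}^k\sum_{j=1}^k\sqrt{\tfrac{s_{ij}s_{ji}}{n_in_j}}\,|B_i||C_j|\,\Bigr|\le\lambda_B\, n\Bigl(b\sum_{i=1}^k c_i(1-c_i)\Bigr)^{1/2}.\]
   Context: All graphs are simple, undirected and connected. $G$ is $S$-regular ($S=(s_{ij})$ a $k\times k$ nonnegative integer matrix) if $V$ is partitioned into nonempty cells $V_1,\dots,V_k$ such that every vertex of $V_i$ has exactly $s_{ij}$ neighbours in $V_j$. $|E(B,C)|$ denotes the number of pairs $(u,v)\in B\times C$ with $uv\in E$ (i.e. $\mathbf{1}_B^TA\mathbf{1}_C$, $A$ the adjacency matrix). The subspace $W=\mathrm{span}\{\mathbf{1}_{V_1},\dots,\mathbf{1}_{V_k}\}$ is $A$-invariant with eigenvalues on $W$ equal to those of $S$; the eigenvalues of $A$ on $W^\perp$ are the bulk eigenvalues (assume $n>k$), and $\lambda_B$ is the largest absolute value of a bulk eigenvalue. *)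

(* Defs.v *)
From mathcomp Require Import all_boot all_order all_algebra.
Set Implicit Arguments. Unset Strict Implicit. Unset Printing Implicit Defensive.
Import Order.TTheory GRing.Theory Num.Theory.
Local Open Scope ring_scope.

Definition simple_connected_graph n (adj : rel 'I_n) : Prop :=
  symmetric adj /\ irreflexive adj /\ (forall u v, connect adj u v).

Definition cellset n k (cell : 'I_n -> 'I_k) (j : 'I_k) : {set 'I_n} :=
  [set v | cell v == j].

Definition S_regular n k (adj : rel 'I_n) (cell : 'I_n -> 'I_k)
    (S : 'M[nat]_k) : Prop :=
  (forall j : 'I_k, cellset cell j != set0) /\
  (forall (v : 'I_n) (j : 'I_k),
      #|[set u in cellset cell j | adj v u]| = S (cell v) j).

Definition adjmx (R : nzRingType) n (adj : rel 'I_n) : 'M[R]_n :=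
  \matrix_(i, j) (adj i j)%:R.

Definition indic (R : nzRingType) n (X : {set 'I_n}) : 'cV[R]_n :=
  \col_i (i \in X)%:R.

(* l is a bulk eigenvalue: eigenvalue of A on W^perp,
   W = span{1_{V_1},...,1_{V_k}} *)
Definition bulk_eigenvalue (R : nzRingType) n k (adj : rel 'I_n)
    (cell : 'I_n -> 'I_k) (l : R) : Prop :=
  exists x : 'cV[R]_n,
    [/\ x != 0,
        (forall j : 'I_k, (indic R (cellset cell j))^T *m x = 0) &
        adjmx R adj *m x = l *: x].

Definition nE n (adj : rel 'I_n) (B C : {set 'I_n}) : nat :=
  #|[set p : 'I_n * 'I_n | [&& p.1 \in B, p.2 \in C & adj p.1 p.2]]|.

(* Main.v *)
Require Import Defs.
From mathcomp Require Import all_boot all_order all_algebra.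
From mathcomp Require Import complex ring.
Import Order.TTheory GRing.Theory Num.Theory.
Local Open Scope ring_scope.
Local Open Scope sesquilinear_scope.

Lemma sum_cells (T : nmodType) n k (cell : 'I_n -> 'I_k) (F : 'I_n -> T) :
  \sum_u F u = \sum_j \sum_(u | cell u == j) F u.
Proof. by rewrite (partition_big cell xpredT). Qed.

Lemma sum_cell_zero (T : pzRingType) n k (cell : 'I_n -> 'I_k)
    (x : 'I_n -> T) (g : 'I_k -> T) :
  (forall j, \sum_(u | cell u == j) x u = 0) -> \sum_u x u * g (cell u) = 0.
Proof.
move=> hx; rewrite (@sum_cells _ _ _ cell); apply: big1 => j _.
rewrite (eq_bigr (fun u => x u * g j)); last by move=> u /eqP->.
by rewrite -mulr_suml hx mul0r.
Qed.

Lemma cell_count_adj n k (adj : rel 'I_n) (cell : 'I_n -> 'I_k) v j :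
  \sum_(u | cell u == j) (adj v u : nat) = #|[set u in cellset cell j | adj v u]|.
Proof.
rewrite -sum1_card big_mkcond /= [RHS]big_mkcond /=; apply: eq_bigr => u _.
by rewrite !inE; case: (cell u == j); case: (adj v u).
Qed.

Lemma nbr_sum (T : pzRingType) n k (adj : rel 'I_n) (cell : 'I_n -> 'I_k) S
    (Sreg : S_regular adj cell S) (h : 'I_k -> T) v :
  \sum_u (adj v u)%:R * h (cell u) = \sum_j (S (cell v) j)%:R * h j.
Proof.
rewrite (@sum_cells _ _ _ cell); apply: eq_bigr => j _.
rewrite (eq_bigr (fun u => (adj v u)%:R * h j)); last by move=> u /eqP->.
by rewrite -mulr_suml -natr_sum cell_count_adj Sreg.2.
Qed.

Lemma bulk_from_real (R : rcfType) n k (adj : rel 'I_n) (cell : 'I_n -> 'I_k)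
    (r : R) (z : 'I_n -> R) :
  (forall v, \sum_w (adj v w)%:R * z w = r * z v) ->
  (forall j, \sum_(w | cell w == j) z w = 0) ->
  (exists v, z v != 0) -> bulk_eigenvalue adj cell r.
Proof.
move=> hA hc [v0 hv0]; exists (\col_v z v); split.
- apply/negP => /eqP/colP/(_ v0); rewrite !mxE => h.
  by move: hv0; rewrite h eqxx.
- move=> j; apply/matrixP => a b; rewrite !mxE.
  transitivity (\sum_(w | cell w == j) z w); last exact: hc j.
  rewrite [RHS]big_mkcond /=.
  apply: eq_bigr => w _; rewrite !mxE /cellset inE.
  by case: (cell w == j); rewrite ?mul1r ?mul0r.
- apply/matrixP => a b; rewrite !mxE -hA; apply: eq_bigr => w _.
  by rewrite !mxE.
Qed.

Lemma bulk_from_complex (R : rcfType) n k (adj : rel 'I_n) (cell : 'I_n -> 'I_k)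
    (r : R) (u : 'I_n -> R[i]) :
  (forall v, \sum_w (adj v w)%:R * u w = (r%:C)%C * u v) ->
  (forall j, \sum_(w | cell w == j) u w = 0) ->
  (exists v, u v != 0) -> bulk_eigenvalue adj cell r.
Proof.
move=> hA hc [v0 hv0].
have rr : (r%:C)%C \is Num.real by apply/complex_realP; exists r.
have [hre|hre] := eqVneq (complex.Re (u v0)) 0; last first.
  apply: (@bulk_from_real _ _ _ _ _ _ (fun v => complex.Re (u v))); last by exists v0.
  - move=> v; apply: complexI; rewrite rmorph_sum rmorphM /= complexRe.
    rewrite -ReMl // -(hA v) raddf_sum /=; apply: eq_bigr => w _.
    by rewrite rmorphM /= rmorph_nat complexRe ReMl // realn.
  - move=> j; apply: complexI; rewrite rmorph_sum /= rmorph0.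
    rewrite (eq_bigr (fun w => 'Re (u w))); last by move=> w _; rewrite complexRe.
    by rewrite -raddf_sum /= hc raddf0.
have [him|him] := eqVneq (complex.Im (u v0)) 0; last first.
  apply: (@bulk_from_real _ _ _ _ _ _ (fun v => complex.Im (u v))); last by exists v0.
  - move=> v; apply: complexI; rewrite rmorph_sum rmorphM /= complexIm.
    rewrite -ImMl // -(hA v) raddf_sum /=; apply: eq_bigr => w _.
    by rewrite rmorphM /= rmorph_nat complexIm ImMl // realn.
  - move=> j; apply: complexI; rewrite rmorph_sum /= rmorph0.
    rewrite (eq_bigr (fun w => 'Im (u w))); last by move=> w _; rewrite complexIm.
    by rewrite -raddf_sum /= hc raddf0.
move: hv0 hre him; case: (u v0) => a b /= h ha hb; move: h.
by rewrite ha hb eqxx.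
Qed.

Lemma cellsize_nz (T : numDomainType) n k (adj : rel 'I_n) (cell : 'I_n -> 'I_k) S
  (Sreg : S_regular adj cell S) j : (#|cellset cell j|)%:R != 0 :> T.
Proof.
rewrite pnatr_eq0 -lt0n card_gt0; exact: Sreg.1.
Qed.

Lemma sum_const_cell (T : pzSemiRingType) n k (cell : 'I_n -> 'I_k) j (c : T) :
  \sum_(w | cell w == j) c = c * (#|cellset cell j|)%:R.
Proof.
rewrite (eq_bigl (fun w => w \in cellset cell j)); last by move=> w; rewrite inE.
by rewrite sumr_const mulr_natr.
Qed.

Lemma bulk_from_row (R : rcfType) n k (adj : rel 'I_n) (cell : 'I_n -> 'I_k) S
    (sym : symmetric adj) (Sreg : S_regular adj cell S)
    (r : R) (p : 'I_n -> R[i]) (x : 'I_n -> R) :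
  (forall v, \sum_w p w * (adj w v)%:R = (r%:C)%C * p v) ->
  (forall j, \sum_(w | cell w == j) x w = 0) ->
  \sum_w p w * ((x w)%:C)%C != 0 -> bulk_eigenvalue adj cell r.
Proof.
move=> hp hx hnz.
pose N := fun j => (#|cellset cell j|)%:R : R[i].
have Nnz : forall j, N j != 0 by move=> j; exact: (@cellsize_nz _ _ _ _ _ _ Sreg j).
pose al := fun j => (\sum_(w | cell w == j) p w) / N j.
pose u := fun w => p w - al (cell w).
have uc : forall j, \sum_(w | cell w == j) u w = 0.
  move=> j; rewrite /u sumrB [X in _ - X](eq_bigr (fun _ => al j)); last by move=> w /eqP->.
  by rewrite sum_const_cell /al divfK ?subrr.
pose e := fun l => (r%:C)%C * al l - \sum_j (S l j)%:R * al j.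
have E1 : forall v, \sum_w (adj v w)%:R * u w - (r%:C)%C * u v = e (cell v).
  move=> v; rewrite /u /e.
  rewrite (eq_bigr (fun w => p w * (adj w v)%:R - (adj v w)%:R * al (cell w))); last first.
    by move=> w _; rewrite mulrBr mulrC sym.
  rewrite sumrB hp (@nbr_sum _ _ _ _ _ _ Sreg). ring.
have E2 : forall l, \sum_(v | cell v == l) (\sum_w (adj v w)%:R * u w - (r%:C)%C * u v) = 0.
  move=> l; rewrite sumrB -mulr_sumr uc mulr0 subr0 exchange_big /=.
  rewrite (eq_bigr (fun w => u w * (S (cell w) l)%:R)).
    exact: (@sum_cell_zero _ _ _ cell _ (fun j => (S j l)%:R) uc).
  move=> w _; rewrite -(Sreg.2 w l) -cell_count_adj natr_sum mulr_sumr.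
  by apply: eq_bigr => v _; rewrite mulrC sym.
have e0 : forall l, e l = 0.
  move=> l; move: (E2 l).
  rewrite (eq_bigr (fun _ => e l)); last by move=> v /eqP <-; exact: E1.
  by rewrite sum_const_cell => /eqP; rewrite mulf_eq0 (negbTE (Nnz l)) orbF => /eqP.
have uE : forall v, \sum_w (adj v w)%:R * u w = (r%:C)%C * u v.
  by move=> v; apply/eqP; rewrite -subr_eq0 E1 e0.
apply: (@bulk_from_complex _ _ _ adj cell r u uE uc).
have split : \sum_w p w * ((x w)%:C)%C
   = \sum_w u w * ((x w)%:C)%C + \sum_w ((x w)%:C)%C * al (cell w).
  rewrite -big_split /=; apply: eq_bigr => w _; rewrite /u; ring.
rewrite (@sum_cell_zero _ _ _ cell _ (fun j => al j)) ?addr0 in split; last first.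
  by move=> j; rewrite -rmorph_sum hx rmorph0.
case: (pickP (fun w => u w != 0)) => [w hw|h]; first by exists w.
move: hnz; rewrite split big1 ?eqxx // => w _.
by move: (h w) => /negbFE/eqP->; rewrite mul0r.
Qed.
Lemma spec_bound (R : rcfType) n (AC : 'M[R[i]]_n) (xc : 'cV_n) (lam : R) :
  AC \is hermsymmx ->
  (forall (i : 'I_n) (r : R),
     (forall v, \sum_w spectralmx AC i w * AC w v = (r%:C)%C * spectralmx AC i v) ->
     \sum_w spectralmx AC i w * xc w 0 != 0 -> r ^+ 2 <= lam ^+ 2) ->
  ((AC *m xc)^t* *m (AC *m xc)) 0 0 <= ((lam ^+ 2)%:C)%C * (xc^t* *m xc) 0 0.
Proof.
move=> hH good.
set P := spectralmx AC; set d := spectral_diag AC.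
have hn : AC \is normalmx := hermitian_normalmx hH.
have hA : AC = invmx P *m diag_mx d *m P := (orthomx_spectralP hn).
have Pu : P \is unitarymx := spectral_unitarymx AC.
have PU : P \in unitmx := spectral_unit AC.
have PPs : P *m P^t* = 1%:M by apply/eqP; move: Pu; rewrite qualifE.
have invP : invmx P = P^t* := invmx_unitary Pu.
have PA : P *m AC = diag_mx d *m P.
  by rewrite {1}hA !mulmxA mulmxV // mul1mx.
have xcE : xc = P^t* *m (P *m xc) by rewrite mulmxA -invP mulVmx // mul1mx.
set y := P *m xc.
have AxE : AC *m xc = P^t* *m (diag_mx d *m y).
  by rewrite hA -invP /y !mulmxA.
have nrm : forall w : 'cV_n, (P^t* *m w)^t* *m (P^t* *m w) = w^t* *m w.
  move=> w; rewrite trmx_mul map_mxM trmxCK.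
  by rewrite mulmxA -(mulmxA _ P) PPs mulmx1.
rewrite AxE nrm.
have -> : xc^t* *m xc = y^t* *m y by rewrite {1 2}xcE nrm.
rewrite !mxE mulr_sumr; apply: ler_sum => i _.
rewrite !mxE.
have /mxOverP/(_ 0 i)/complex_realP [r dr] := hermitian_spectral_diag_real hH.
rewrite (bigD1 i) //= big1 ?addr0; last first.
  by move=> j /negbTE ji; rewrite !mxE eq_sym ji mulr0n mul0r.
rewrite !mxE eqxx mulr1n -/d dr.
set yi := \sum_(j < n) P i j * xc j 0.
have ->: (Num.conj (r%:C%C * yi)) * (r%:C%C * yi)
   = ((r ^+ 2)%:C)%C * (Num.conj yi * yi).
  rewrite rmorphM /= conj_Creal; last by apply/complex_realP; exists r.
  by rewrite rmorphXn /= expr2; ring.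
have [y0|ynz] := eqVneq yi 0.
  by rewrite y0 !(rmorph0, mul0r, mulr0).
apply: ler_wpM2r; first by rewrite mulrC mul_conjC_ge0.
rewrite lecR; apply: (good i r).
  move=> v; move/matrixP: (PA) => /(_ i v).
  by rewrite !mxE => ->; rewrite (bigD1 i) //= big1 ?addr0 ?mxE ?eqxx ?mulr1n ?dr // => j /negbTE ji; rewrite !mxE eq_sym ji mulr0n mul0r.
by [].
Qed.

Lemma conj_realC (R : rcfType) (t : R) : Num.conj ((t%:C)%C : R[i]) = (t%:C)%C.
Proof. by rewrite conj_Creal //; apply/complex_realP; exists t. Qed.

Lemma keyK (R : rcfType) n k (adj : rel 'I_n) (cell : 'I_n -> 'I_k) S (lam : R)
    (sym : symmetric adj) (Sreg : S_regular adj cell S)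
    (hb : forall l, bulk_eigenvalue adj cell l -> `|l| <= lam)
    (x : 'I_n -> R) (hx : forall j, \sum_(u | cell u == j) x u = 0) :
  \sum_u (\sum_v (adj u v)%:R * x v) ^+ 2 <= lam ^+ 2 * \sum_u x u ^+ 2.
Proof.
pose AC := adjmx R[i] adj.
pose xc : 'cV[R[i]]_n := \col_u ((x u)%:C)%C.
have hH : AC \is hermsymmx.
  apply/is_hermitianmxP; rewrite expr0 scale1r; apply/matrixP => a b.
  by rewrite !mxE conjC_nat sym.
have := @spec_bound R n AC xc lam hH.
have Ax : forall u, \sum_v AC u v * xc v 0 = ((\sum_v (adj u v)%:R * x v)%:C)%C.
  move=> u; rewrite rmorph_sum; apply: eq_bigr => v _.
  by rewrite !mxE rmorphM /= rmorph_nat.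
have -> : ((AC *m xc)^t* *m (AC *m xc)) 0 0
        = ((\sum_u (\sum_v (adj u v)%:R * x v) ^+ 2)%:C)%C.
  rewrite !mxE rmorph_sum; apply: eq_bigr => u _.
  by rewrite !mxE Ax conj_realC -rmorphM expr2.
have -> : (xc^t* *m xc) 0 0 = ((\sum_u x u ^+ 2)%:C)%C.
  rewrite !mxE rmorph_sum; apply: eq_bigr => u _.
  by rewrite !mxE conj_realC -rmorphM expr2.
rewrite -rmorphM lecR; apply.
move=> i r hr hnz.
have hbk : bulk_eigenvalue adj cell r.
  apply: (@bulk_from_row _ _ _ adj cell S sym Sreg r
            (fun w => spectralmx AC i w) x) => //.
  - move=> v; rewrite -hr; apply: eq_bigr => w _; by rewrite /AC mxE.
  - by move: hnz; congr (_ != _); apply: eq_bigr => w _; rewrite mxE.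
have hr2 := hb r hbk.
rewrite -real_normK ?num_real // !expr2.
by apply: ler_pM => //; apply: normr_ge0.
Qed.
Lemma CSineq (R : realDomainType) (I : finType) (a b : I -> R) :
  (\sum_i a i * b i) ^+ 2 <= (\sum_i a i ^+ 2) * (\sum_i b i ^+ 2).
Proof.
set Saa := \sum_i a i ^+ 2; set Sbb := \sum_i b i ^+ 2; set Sab := \sum_i a i * b i.
have H : \sum_i \sum_j (a i * b j - a j * b i) ^+ 2 = 2%:R * (Saa * Sbb - Sab ^+ 2).
  rewrite (eq_bigr (fun i => a i ^+ 2 * Sbb + b i ^+ 2 * Saa - 2%:R * (a i * b i) * Sab)).
    rewrite sumrB big_split /= -!mulr_suml -mulr_sumr -/Saa -/Sab -/Sbb; ring.
  move=> i _; rewrite /Sbb /Saa /Sab !mulr_sumr -!big_split -sumrB /=.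
  by apply: eq_bigr => j _; ring.
have : 0 <= \sum_i \sum_j (a i * b j - a j * b i) ^+ 2.
  by apply: sumr_ge0 => i _; apply: sumr_ge0 => j _; apply: sqr_ge0.
rewrite H pmulr_rge0 ?ltr0n // subr_ge0 //.
Qed.
Lemma cell_indic (R : pzSemiRingType) n k (cell : 'I_n -> 'I_k) (X : {set 'I_n}) j :
  \sum_(u | cell u == j) (u \in X)%:R = (#|X :&: cellset cell j|)%:R :> R.
Proof.
rewrite -sum1_card natr_sum big_mkcond [RHS]big_mkcond /=; apply: eq_bigr => u _.
by rewrite !inE; case: (cell u == j); case: (u \in X); rewrite ?andbF.
Qed.

Lemma normx (R : numFieldType) n k (cell : 'I_n -> 'I_k) (X : {set 'I_n})
  (Nnz : forall j, (#|cellset cell j|)%:R != 0 :> R) :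
  \sum_u ((u \in X)%:R - (#|X :&: cellset cell (cell u)|)%:R / (#|cellset cell (cell u)|)%:R) ^+ 2
  = \sum_j (#|X :&: cellset cell j|)%:R * (1 - (#|X :&: cellset cell j|)%:R / (#|cellset cell j|)%:R) :> R.
Proof.
rewrite (@sum_cells _ _ _ cell); apply: eq_bigr => j _.
set Xj := (#|X :&: cellset cell j|)%:R : R; set Nj := (#|cellset cell j|)%:R : R.
rewrite (eq_bigr (fun u => (u \in X)%:R * (1 - 2%:R * (Xj / Nj)) + (Xj / Nj) ^+ 2)).
  rewrite big_split /= -mulr_suml cell_indic sum_const_cell -/Xj -/Nj.
  by field.
move=> u /eqP ->; rewrite -/Xj -/Nj.
by case: (u \in X) => /=; ring.
Qed.

Lemma dcount (R : pzSemiRingType) n k (adj : rel 'I_n) (cell : 'I_n -> 'I_k) S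
    (sym : symmetric adj) (Sreg : S_regular adj cell S) i j :
  (#|cellset cell i|)%:R * (S i j)%:R = (#|cellset cell j|)%:R * (S j i)%:R :> R.
Proof.
have E : forall i j, (\sum_(u | cell u == i) \sum_(v | cell v == j) (adj u v : nat))%N
                    = (#|cellset cell i| * S i j)%N.
  move=> i' j'.
  rewrite (eq_bigr (fun _ => S i' j')); last first.
    by move=> u /eqP <-; rewrite cell_count_adj Sreg.2.
  rewrite (eq_bigl (fun w => w \in cellset cell i')); last by move=> w; rewrite inE.
  by rewrite sum_nat_const.
rewrite -!natrM -E -E exchange_big /=.
congr (_ %:R); apply: eq_bigr => v _; apply: eq_bigr => u _.
by rewrite sym.
Qed.

Local Close Scope sesquilinear_scope.

Lemma sqrt_coef (R : rcfType) n k (adj : rel 'I_n) (cell : 'I_n -> 'I_k) S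
    (sym : symmetric adj) (Sreg : S_regular adj cell S) i j :
  Num.sqrt (((S i j)%:R * (S j i)%:R) / ((#|cellset cell i|)%:R * (#|cellset cell j|)%:R))
  = (S i j)%:R / (#|cellset cell j|)%:R :> R.
Proof.
have Ni := @cellsize_nz R _ _ _ _ _ Sreg i.
have Nj := @cellsize_nz R _ _ _ _ _ Sreg j.
have D := @dcount R _ _ _ _ _ sym Sreg i j.
have -> : ((S i j)%:R * (S j i)%:R) / ((#|cellset cell i|)%:R * (#|cellset cell j|)%:R)
          = ((S i j)%:R / (#|cellset cell j|)%:R) ^+ 2 :> R.
  have -> : (S j i)%:R = (#|cellset cell i|)%:R * (S i j)%:R / (#|cellset cell j|)%:R :> R.
    by rewrite D mulrAC divff // mul1r.
  by field; apply/andP.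
by rewrite sqrtr_sqr ger0_norm // divr_ge0 // ler0n.
Qed.

Theorem mainTheorem9 (R : rcfType) (n k : nat) (adj : rel 'I_n)
    (cell : 'I_n -> 'I_k) (S : 'M[nat]_k) (lamB : R) (B C : {set 'I_n}) :
  simple_connected_graph adj ->
  S_regular adj cell S ->
  (k < n)%N ->
  (exists l, bulk_eigenvalue adj cell l /\ `|l| = lamB) ->
  (forall l, bulk_eigenvalue adj cell l -> `|l| <= lamB) ->
  let ni := fun i : 'I_k => (#|cellset cell i|)%:R : R in
  let Bi := fun i : 'I_k => (#|B :&: cellset cell i|)%:R : R in
  let Cj := fun j : 'I_k => (#|C :&: cellset cell j|)%:R : R in
  let c := fun i : 'I_k => Cj i / ni i in
  let b := (#|B|)%:R / (n%:R : R) in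
  `| (nE adj B C)%:R
     - \sum_(i < k) \sum_(j < k)
         Num.sqrt (((S i j)%:R * (S j i)%:R) / (ni i * ni j)) * Bi i * Cj j |
  <= lamB * n%:R * Num.sqrt (b * \sum_(i < k) c i * (1 - c i)).
Proof.
move=> [sym _] Sreg kn [l0 [_ hl0e]] hb.
pose ni := fun i : 'I_k => (#|cellset cell i|)%:R : R.
pose Bi := fun i : 'I_k => (#|B :&: cellset cell i|)%:R : R.
pose Cj := fun j : 'I_k => (#|C :&: cellset cell j|)%:R : R.
pose c := fun i : 'I_k => Cj i / ni i.
pose b := (#|B|)%:R / (n%:R : R).
suff H : `| (nE adj B C)%:R
     - \sum_(i < k) \sum_(j < k)
         Num.sqrt (((S i j)%:R * (S j i)%:R) / (ni i * ni j)) * Bi i * Cj j |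
  <= lamB * n%:R * Num.sqrt (b * \sum_(i < k) c i * (1 - c i)) by exact: H.
have lam0 : 0 <= lamB by rewrite -hl0e normr_ge0.
have n0 : (0 < n)%N by apply: leq_ltn_trans kn.
have Nnz : forall j, ni j != 0 by move=> j; exact: (@cellsize_nz R _ _ _ _ _ Sreg j).
pose A u v := (adj u v)%:R : R.
pose beta j := Bi j / ni j.
pose xB u := (u \in B)%:R - beta (cell u).
pose xC u := (u \in C)%:R - c (cell u).
have hxB : forall j, \sum_(u | cell u == j) xB u = 0.
  move=> j; rewrite sumrB cell_indic [X in _ - X](eq_bigr (fun _ => beta j)).
    by rewrite sum_const_cell /beta divfK ?subrr.
  by move=> u /eqP->.
have hxC : forall j, \sum_(u | cell u == j) xC u = 0.
  move=> j; rewrite sumrB cell_indic [X in _ - X](eq_bigr (fun _ => c j)).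
    by rewrite sum_const_cell /c divfK ?subrr.
  by move=> u /eqP->.
pose Y u := \sum_v A u v * xC v.
pose X := \sum_u xB u * Y u.
have hnE : (nE adj B C)%:R = \sum_u \sum_v (u \in B)%:R * (A u v * (v \in C)%:R) :> R.
  rewrite pair_big /= /nE -sum1dep_card natr_sum big_mkcond /=; apply: eq_bigr => p _.
  case: p => u v /=; rewrite /A.
  by case: (u \in B); case: (v \in C); case: (adj u v); rewrite /= ?(mul1r, mul0r, mulr0, mulr1).
pose h i := \sum_j (S i j)%:R * c j.
pose h' i := \sum_j (S i j)%:R * beta j.
have hrow : forall u, \sum_v A u v * (v \in C)%:R = h (cell u) + Y u.
  move=> u; rewrite /Y /h -(@nbr_sum _ _ _ _ _ _ Sreg) -big_split /=.
  by apply: eq_bigr => v _; rewrite /A /xC; ring.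
have hdiff : (nE adj B C)%:R
     - \sum_(i < k) \sum_(j < k)
         Num.sqrt (((S i j)%:R * (S j i)%:R) / (ni i * ni j)) * Bi i * Cj j = X.
  rewrite hnE (eq_bigr (fun u => (beta (cell u) + xB u) * (h (cell u) + Y u))); last first.
    by move=> u _; rewrite -mulr_sumr hrow /xB; congr (_ * _); ring.
  rewrite (eq_bigr (fun u => beta (cell u) * h (cell u) + (xB u * h (cell u))
                             + beta (cell u) * Y u + xB u * Y u)); last by move=> u _; ring.
  rewrite !big_split /= -/X.
  rewrite (@sum_cell_zero _ _ _ cell _ h hxB) addr0.
  have -> : \sum_u beta (cell u) * Y u = 0.
    rewrite /Y (eq_bigr (fun u => \sum_v xC v * (A v u * beta (cell u)))); last first.
      by move=> u _; rewrite mulr_sumr; apply: eq_bigr => v _; rewrite /A sym; ring.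
    rewrite exchange_big /=.
    rewrite (eq_bigr (fun v => xC v * h' (cell v))); last first.
      by move=> v _; rewrite -mulr_sumr /h' -(@nbr_sum _ _ _ _ _ _ Sreg).
    exact: (@sum_cell_zero _ _ _ cell _ h' hxC).
  rewrite addr0 (@sum_cells _ _ _ cell).
  rewrite [X in _ + _ - X](eq_bigr (fun i => \sum_j (S i j)%:R / ni j * Bi i * Cj j)); last first.
    move=> i _; apply: eq_bigr => j _.
    by rewrite /ni (@sqrt_coef R _ _ _ _ _ sym Sreg i j).
  set L := \sum_j _; set M := \sum_(i < k) _.
  suff -> : L = M by rewrite addrAC subrr add0r.
  rewrite /L /M; apply: eq_bigr => i _.
  rewrite (eq_bigr (fun _ => beta i * h i)); last by move=> u /eqP->.
  rewrite sum_const_cell /h mulr_sumr mulr_suml; apply: eq_bigr => j _.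
  rewrite /beta /c -/(ni i).
  by field; rewrite ?Nnz.
rewrite hdiff.
have cnn : forall j, 0 <= c j * (1 - c j).
  move=> j; have nj0 : 0 < ni j by rewrite lt0r Nnz ler0n.
  apply: mulr_ge0; first by rewrite /c divr_ge0 ?ler0n.
  rewrite subr_ge0 /c ler_pdivrMr // mul1r /Cj /ni ler_nat.
  by apply: subset_leq_card; apply: subsetIr.
have hB2 : \sum_u xB u ^+ 2 <= (#|B|)%:R.
  rewrite (@normx R _ _ cell B Nnz).
  have -> : (#|B|)%:R = \sum_j Bi j :> R.
    rewrite -sum1_card natr_sum big_mkcond /= (@sum_cells _ _ _ cell).
    apply: eq_bigr => j _; rewrite /Bi -cell_indic; apply: eq_bigr => u _.
    by case: (u \in B).
  apply: ler_sum => j _.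
  rewrite mulrBr mulr1 gerDl oppr_le0; apply: mulr_ge0; first exact: ler0n.
  by rewrite divr_ge0 ?ler0n.
have hC2 : \sum_u xC u ^+ 2 <= n%:R * \sum_j c j * (1 - c j).
  rewrite (@normx R _ _ cell C Nnz) mulr_sumr; apply: ler_sum => j _.
  have -> : (#|C :&: cellset cell j|)%:R * (1 - (#|C :&: cellset cell j|)%:R / (#|cellset cell j|)%:R)
           = ni j * (c j * (1 - c j)) :> R.
    by rewrite /c /Cj /ni; field; rewrite ?Nnz.
  apply: ler_wpM2r; first exact: cnn.
  rewrite /ni ler_nat; rewrite -[X in (_ <= X)%N]card_ord; exact: max_card.
have hkey : \sum_u Y u ^+ 2 <= lamB ^+ 2 * \sum_u xC u ^+ 2
  := @keyK R n k adj cell S lamB sym Sreg hb xC hxC.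
have hS0 : 0 <= b * \sum_j c j * (1 - c j).
  by apply: mulr_ge0; [rewrite /b divr_ge0 ?ler0n | apply: sumr_ge0 => j _; apply: cnn].
have hX2 : X ^+ 2 <= (lamB * n%:R * Num.sqrt (b * \sum_j c j * (1 - c j))) ^+ 2.
  apply: le_trans (@CSineq R _ xB Y) _.
  apply: le_trans (_ : _ <= (#|B|)%:R * (lamB ^+ 2 * (n%:R * \sum_j c j * (1 - c j)))) _.
    apply: ler_pM.
    - by apply: sumr_ge0 => u _; apply: sqr_ge0.
    - by apply: sumr_ge0 => u _; apply: sqr_ge0.
    - exact: hB2.
    apply: le_trans hkey _; apply: ler_wpM2l; [exact: sqr_ge0 | exact: hC2].
  rewrite !exprMn sqr_sqrtr // /b.
  have nnz : (n%:R : R) != 0 by rewrite pnatr_eq0 -lt0n.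
  by rewrite le_eqVlt; apply/orP; left; apply/eqP; field.
rewrite -sqrtr_sqr; apply: le_trans (ler_wsqrtr hX2) _.
rewrite sqrtr_sqr ger0_norm //.
by apply: mulr_ge0; [apply: mulr_ge0 => //; exact: ler0n | exact: sqrtr_ge0].
Qed.
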